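(* For a semigroup $S$ the following are equivalent: (i) $S$ is intra-regular; (ii) $\underline{A}\cap\underline{B}\subseteq\underline{A}\circ\underline{B}$ for every IF left ideal $A=(\mu_A,\nu_A)$ and every IF right ideal $B=(\mu_B,\nu_B)$ of $S$.
   Context: A semigroup $S$ is intra-regular if for every $x\in S$ there are $a,b\in S$ with $x=ax^2b$. An intuitionistic fuzzy (IF) subset of $S$ is a pair $A=(\mu_A,\nu_A)$ of functions $S\to[0,1]$ with $\mu_A(x)+\nu_A(x)\le1$ for all $x$. $A$ is an IF right (resp. left) ideal of $S$ if $\mu_A(xy)\ge\mu_A(x)$ and $\nu_A(xy)\le\nu_A(x)$ (resp. $\mu_A(xy)\ge\mu_A(y)$ and $\nu_A(xy)\le\nu_A(y)$) for all $x,y\in S$. For $x\in S$ and $\alpha,\beta\in[0,1]$ with $\alpha+\beta\le1$, the IF point $x_{(\alpha,\beta)}$ is the IF subset of $S$ with value $(\alpha,\beta)$ at $x$ and $(0,1)$ elsewhere (so all points $x_{(0,1)}$ coincide). $\underline{S}$ is the set of all IF points of $S$; it is a semigroup under $x_{(\alpha,\beta)}\circ y_{(\gamma,\delta)}=(xy)_{(\min(\alpha,\gamma),\max(\beta,\delta))}$. For an IF subset $A$, $\underline{A}=\{x_{(\alpha,\beta)}\in\underline{S}:\mu_A(x)\ge\alpha,\ \nu_A(x)\le\beta\}$. For subsets $X,Y\subseteq\underline{S}$, $X\circ Y=\{p\circ q:p\in X,q\in Y\}$. *)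

(* Defs.v *)
From Stdlib Require Import Reals.
Open Scope R_scope.

Definition associative {S : Type} (op : S -> S -> S) : Prop :=
  forall x y z, op x (op y z) = op (op x y) z.

Definition intra_regular {S : Type} (op : S -> S -> S) : Prop :=
  forall x, exists a b, x = op (op a (op x x)) b.

Definition IF_subset {S : Type} (mu nu : S -> R) : Prop :=
  forall x, 0 <= mu x <= 1 /\ 0 <= nu x <= 1 /\ mu x + nu x <= 1.

Definition IF_left_ideal {S : Type} (op : S -> S -> S) (mu nu : S -> R) : Prop :=
  IF_subset mu nu /\ forall x y, mu (op x y) >= mu y /\ nu (op x y) <= nu y.

Definition IF_right_ideal {S : Type} (op : S -> S -> S) (mu nu : S -> R) : Prop :=
  IF_subset mu nu /\ forall x y, mu (op x y) >= mu x /\ nu (op x y) <= nu x.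

(* IF points are themselves IF subsets, represented as functions S -> R*R
   (pair (membership, non-membership)).  [is_point p x a b] says p = x_(a,b):
   value (a,b) at x and (0,1) elsewhere.  Hence all x_(0,1) coincide. *)
Definition is_point {S : Type} (p : S -> R * R) (x : S) (a b : R) : Prop :=
  0 <= a /\ 0 <= b /\ a + b <= 1 /\
  forall y, (y = x -> p y = (a, b)) /\ (y <> x -> p y = (0, 1)).

Definition IF_points (S : Type) : (S -> R * R) -> Prop :=
  fun p => exists x a b, is_point p x a b.

Definition under {S : Type} (mu nu : S -> R) : (S -> R * R) -> Prop :=
  fun p => exists x a b, is_point p x a b /\ mu x >= a /\ nu x <= b.

Definition point_prod {S : Type} (op : S -> S -> S) (p q r : S -> R * R) : Prop :=
  exists x a b y c d, is_point p x a b /\ is_point q y c d /\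
    is_point r (op x y) (Rmin a c) (Rmax b d).

Definition set_prod {S : Type} (op : S -> S -> S) (X Y : (S -> R * R) -> Prop)
  : (S -> R * R) -> Prop :=
  fun r => exists p q, X p /\ Y q /\ point_prod op p q r.

(* Main.v *)
Require Import Defs.
From Stdlib Require Import Reals Lra Classical ClassicalEpsilon.
Open Scope R_scope.

Definition pt {S : Type} (x : S) (a b : R) : S -> R * R :=
  fun y => if excluded_middle_informative (y = x) then (a, b) else (0, 1).

Lemma pt_is_point {S : Type} (x : S) a b :
  0 <= a -> 0 <= b -> a + b <= 1 -> is_point (pt x a b) x a b.
Proof.
  intros; repeat split; auto; intros; unfold pt;
  destruct (excluded_middle_informative (y = x)); congruence.
Qed.

Lemma point_unique {S : Type} (q : S -> R * R) u a b u' a' b' :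
  is_point q u a b -> is_point q u' a' b' -> a <> 0 -> u' = u /\ a' = a.
Proof.
  intros [_ [_ [_ H1]]] [_ [_ [_ H2]]] Ha.
  destruct (classic (u = u')) as [e|ne].
  - subst. destruct (H1 u') as [E1 _]. destruct (H2 u') as [E2 _].
    specialize (E1 eq_refl); specialize (E2 eq_refl). rewrite E1 in E2. inversion E2. auto.
  - destruct (H1 u) as [E1 _]. destruct (H2 u) as [_ E2].
    specialize (E1 eq_refl); specialize (E2 ne). rewrite E1 in E2. inversion E2. lra.
Qed.

Lemma char_ge1 (P : Prop) :
  (if excluded_middle_informative P then 1 else 0) >= 1 -> P.
Proof. destruct (excluded_middle_informative P); auto; lra. Qed.

Theorem theorem3p14 (S : Type) (op : S -> S -> S) (Hassoc : associative op) :
  intra_regular op <->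
  (forall muA nuA muB nuB : S -> R,
     IF_left_ideal op muA nuA -> IF_right_ideal op muB nuB ->
     forall p, under muA nuA p -> under muB nuB p ->
       set_prod op (under muA nuA) (under muB nuB) p).
Proof.
  split.
  - intros Hir muA nuA muB nuB [HsA HA] [HsB HB] p
      [x [a [b [Hp1 [Ha1 Hb1]]]]] [x' [a' [b' [Hp2 [Ha2 Hb2]]]]].
    assert (Hc : muB x >= a /\ nuB x <= b).
    { destruct (classic (x = x')) as [e|ne].
      - subst x'. destruct Hp1 as [_ [_ [_ H1]]]. destruct Hp2 as [_ [_ [_ H2]]].
        destruct (H1 x) as [E1 _]. destruct (H2 x) as [E2 _].
        specialize (E1 eq_refl); specialize (E2 eq_refl). rewrite E1 in E2. inversion E2; subst. auto.
      - destruct Hp1 as [_ [_ [_ H1]]]. destruct Hp2 as [_ [_ [_ H2]]].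
        destruct (H1 x) as [E1 _]. destruct (H2 x) as [_ E2].
        specialize (E1 eq_refl); specialize (E2 ne). rewrite E1 in E2. inversion E2; subst.
        destruct (HsB x) as [? [? ?]]. lra. }
    destruct Hc as [Hc1 Hc2].
    destruct (Hir x) as [c [d Hx]].
    pose proof Hp1 as Hp. destruct Hp1 as [h0 [h1 [h2 _]]].
    exists (pt (op c x) a b), (pt (op x d) a b). split; [|split].
    + exists (op c x), a, b. split; [apply pt_is_point; auto|].
      destruct (HA c x). lra.
    + exists (op x d), a, b. split; [apply pt_is_point; auto|].
      destruct (HB x d). lra.
    + exists (op c x), a, b, (op x d), a, b.
      split; [apply pt_is_point; auto|]. split; [apply pt_is_point; auto|].
      rewrite Rmin_left by lra. rewrite Rmax_left by lra.
      assert (E : op (op c x) (op x d) = x).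
      { transitivity (op (op c (op x x)) d); [|symmetry; exact Hx].
        rewrite !Hassoc. reflexivity. }
      rewrite E. exact Hp.
  - intros H x.
    set (L := fun y => y = x \/ exists s, y = op s x).
    set (Rr := fun y => y = x \/ exists t, y = op x t).
    set (muA := fun y => if excluded_middle_informative (L y) then 1 else 0).
    set (nuA := fun y => if excluded_middle_informative (L y) then 0 else 1).
    set (muB := fun y => if excluded_middle_informative (Rr y) then 1 else 0).
    set (nuB := fun y => if excluded_middle_informative (Rr y) then 0 else 1).
    assert (HLA : IF_left_ideal op muA nuA).
    { split.
      - intro y; unfold muA, nuA; destruct (excluded_middle_informative (L y)); lra.
      - intros z y. unfold muA, nuA.
        destruct (excluded_middle_informative (L y)) as [Ly|Ly];
        destruct (excluded_middle_informative (L (op z y))) as [Lz|Lz]; try lra.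
        exfalso. apply Lz. right. destruct Ly as [e|[s e]]; subst y.
        + exists z; reflexivity.
        + exists (op z s). apply Hassoc. }
    assert (HRB : IF_right_ideal op muB nuB).
    { split.
      - intro y; unfold muB, nuB; destruct (excluded_middle_informative (Rr y)); lra.
      - intros y z. unfold muB, nuB.
        destruct (excluded_middle_informative (Rr y)) as [Ly|Ly];
        destruct (excluded_middle_informative (Rr (op y z))) as [Lz|Lz]; try lra.
        exfalso. apply Lz. right. destruct Ly as [e|[s e]]; subst y.
        + exists z; reflexivity.
        + exists (op s z). symmetry; apply Hassoc. }
    assert (Hpt : is_point (pt x 1 0) x 1 0) by (apply pt_is_point; lra).
    assert (HuA : under muA nuA (pt x 1 0)).
    { exists x, 1, 0. split; auto. unfold muA, nuA.
      destruct (excluded_middle_informative (L x)) as [l|l]; [lra|].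
      exfalso; apply l; left; reflexivity. }
    assert (HuB : under muB nuB (pt x 1 0)).
    { exists x, 1, 0. split; auto. unfold muB, nuB.
      destruct (excluded_middle_informative (Rr x)) as [l|l]; [lra|].
      exfalso; apply l; left; reflexivity. }
    destruct (H muA nuA muB nuB HLA HRB _ HuA HuB) as [q [r [HqA [HrB Hpr]]]].
    destruct HqA as [u' [a' [b' [Hq' [Hqa _]]]]].
    destruct HrB as [v' [c' [d' [Hr' [Hrc _]]]]].
    destruct Hpr as [u [a [b [v [c [d [Hq [Hr Hp]]]]]]]].
    assert (Huv : op u v = x /\ Rmin a c = 1).
    { destruct Hp as [_ [_ [_ Hp]]]. destruct Hpt as [_ [_ [_ Hx]]].
      destruct (Hx x) as [Ex _]. specialize (Ex eq_refl).
      destruct (classic (x = op u v)) as [e|ne].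
      - destruct (Hp x) as [E _]. rewrite (E e) in Ex.
        inversion Ex. auto.
      - destruct (Hp x) as [_ E]. rewrite (E ne) in Ex. inversion Ex. lra. }
    destruct Huv as [Huv Hm].
    assert (Ha : a = 1).
    { pose proof (Rmin_l a c). destruct Hq as [_ [? [? _]]]. lra. }
    assert (Hc : c = 1).
    { pose proof (Rmin_r a c). destruct Hr as [_ [? [? _]]]. lra. }
    destruct (point_unique q u a b u' a' b' Hq Hq') as [e1 e2]; [lra|].
    destruct (point_unique r v c d v' c' d' Hr Hr') as [e3 e4]; [lra|].
    subst u' v' a' c' a c.
    apply char_ge1 in Hqa. apply char_ge1 in Hrc.
    destruct Hqa as [eu|[s eu]]; destruct Hrc as [ev|[t ev]]; subst u v.
    + exists x, x. rewrite !Huv. reflexivity.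
    + exists x, (op t t).
      transitivity (op x (op (op x (op x t)) t)).
      * rewrite Huv. symmetry; exact Huv.
      * rewrite !Hassoc. reflexivity.
    + exists (op s s), x.
      transitivity (op (op s (op (op s x) x)) x).
      * rewrite Huv. symmetry; exact Huv.
      * rewrite !Hassoc. reflexivity.
    + exists s, t. rewrite <- Huv at 1. rewrite !Hassoc. reflexivity.
Qed.
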